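(* Let $q>1$ be an integer and $\xi$ a nonzero rational number. Then the real number $E_q(\xi)$ is either irrational or zero. If moreover $|\xi|<1$, then the real number $E_{q^{-1}}(\xi)$ is irrational.
   Context: For $Q\in\mathbb{C}$ not a root of unity, $n_Q=\frac{1-Q^n}{1-Q}$, $n_Q!=\prod_{k=1}^nk_Q$, and $E_Q(z)=\sum_{n\ge0}z^n/n_Q!$. For $q>1$, $E_q$ is entire and $E_{q^{-1}}$ converges for $|z|<q/(q-1)$. *)

(* Defs.v *)
From Stdlib Require Import Reals QArith Qreals.
From Coquelicot Require Import Coquelicot.
Open Scope R_scope.

Definition qnum (Q : R) (n : nat) : R := (1 - Q ^ n) / (1 - Q).

Fixpoint qfact (Q : R) (n : nat) : R :=
  match n with
  | O => 1
  | S k => qfact Q k * qnum Q (S k)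
  end.

Definition qexp (Q z : R) : R := Series (fun n => z ^ n / qfact Q n).

Definition is_rational (x : R) : Prop := exists r : Q, x = Q2R r.

(* Main.v *)
Require Import Defs.
From Stdlib Require Import Reals QArith Qreals Lia Lra Psatz Classical.
From Coquelicot Require Import Coquelicot.
Open Scope R_scope.

Ltac absp := repeat match goal with
 | H : context [?x ^ ?n] |- _ => let X := fresh "X" in set (X := x ^ n) in *; clearbody X
 | |- context [?x ^ ?n] => let X := fresh "X" in set (X := x ^ n) in *; clearbody X end.

Definition isZ (x : R) : Prop := exists z : Z, x = IZR z.

Lemma isZ_IZR z : isZ (IZR z). Proof. exists z; reflexivity. Qed.
Lemma isZ_plus x y : isZ x -> isZ y -> isZ (x + y).
Proof. intros [a ->] [b ->]; exists (a+b)%Z; rewrite plus_IZR; reflexivity. Qed.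
Lemma isZ_mult x y : isZ x -> isZ y -> isZ (x * y).
Proof. intros [a ->] [b ->]; exists (a*b)%Z; rewrite mult_IZR; reflexivity. Qed.
Lemma isZ_opp x : isZ x -> isZ (- x).
Proof. intros [a ->]; exists (-a)%Z; rewrite opp_IZR; reflexivity. Qed.
Lemma isZ_minus x y : isZ x -> isZ y -> isZ (x - y).
Proof. intros; unfold Rminus; apply isZ_plus; auto; apply isZ_opp; auto. Qed.
Lemma isZ_pow x n : isZ x -> isZ (x ^ n).
Proof. intros H; induction n; simpl. exists 1%Z; reflexivity. apply isZ_mult; auto. Qed.
Lemma isZ_0 : isZ 0. Proof. exists 0%Z; reflexivity. Qed.
Lemma isZ_1 : isZ 1. Proof. exists 1%Z; reflexivity. Qed.
Lemma isZ_small x : isZ x -> Rabs x < 1 -> x = 0.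
Proof.
  intros [z ->] H. apply Rabs_def2 in H. destruct H as [H1 H2].
  apply lt_IZR in H1. replace (- (1)) with (IZR (-1)) in H2 by (simpl; lra).
  apply lt_IZR in H2. assert (z = 0%Z) by lia. subst; reflexivity.
Qed.

Fixpoint cc (q : R) (n : nat) : R :=
  match n with O => 1 | S k => cc q k * (q ^ (S k) - 1) end.
Definition dd q n := / cc q n.
Lemma cc_S q n : cc q (S n) = cc q n * (q ^ (S n) - 1).
Proof. reflexivity. Qed.

Lemma pow_ge2 q n : 2 <= q -> 2 <= q ^ (S n).
Proof. intros H. simpl. assert (1 <= q ^ n) by (apply pow_R1_Rle; lra). nra. Qed.

Lemma cc_pos q n : 2 <= q -> 0 < cc q n.
Proof. intros H; induction n. simpl; lra. change (cc q (S n)) with (cc q n * (q ^ (S n) - 1)).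
  pose proof (pow_ge2 q n H). apply Rmult_lt_0_compat; lra. Qed.

Lemma isZ_cc q n : isZ q -> isZ (cc q n).
Proof. intros H; induction n. apply isZ_1. rewrite cc_S. apply isZ_mult; auto.
  apply isZ_minus. apply isZ_pow; auto. apply isZ_1. Qed.

Lemma dd_S q n : 2 <= q -> dd q (S n) = dd q n / (q ^ (S n) - 1).
Proof. intros H. unfold dd. rewrite cc_S. pose proof (pow_ge2 q n H). pose proof (cc_pos q n H).
  field. split; lra. Qed.

(* q-Pascal integrality *)
Lemma cc_G q s M : isZ q -> 2 <= q -> exists z, cc q (s + M) = IZR z * cc q s * cc q M.
Proof.
  intros Hz Hq. revert M. induction s as [|s IHs]; intros M.
  - exists 1%Z. simpl. ring.
  - induction M as [|M IHM].
    + exists 1%Z. rewrite Nat.add_0_r. simpl. ring.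
    + destruct (IHs (S M)) as [z1 H1]. destruct IHM as [z2 H2].
      destruct Hz as [qz Hqz].
      exists (qz ^ Z.of_nat (S M) * z1 + z2)%Z.
      rewrite plus_IZR, mult_IZR, <- pow_IZR, <- Hqz.
      replace (S s + S M)%nat with (S (s + S M)) by lia.
      rewrite cc_S.
      replace (S s + M)%nat with (s + S M)%nat in H2 by lia.
      set (X := cc q (s + S M)) in *.
      replace (S (s + S M)) with (S s + S M)%nat by lia. rewrite pow_add.
      transitivity (q ^ S M * (q ^ S s - 1) * X + (q ^ S M - 1) * X). ring.
      rewrite H1 at 1. rewrite H2. rewrite !cc_S. ring.
Qed.


Definition ff q x := PSeries (dd q) x.

Lemma dd_pos q n : 2 <= q -> 0 < dd q n.
Proof. intros; unfold dd; apply Rinv_0_lt_compat, cc_pos; auto. Qed.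

Lemma CV_dd q : 2 <= q -> CV_radius (dd q) = p_infty.
Proof.
  intros Hq. apply CV_radius_infinite_DAlembert.
  - intros n; apply Rgt_not_eq, dd_pos; auto.
  - apply is_lim_seq_le_le with (u := fun _ => 0) (w := fun n => (/2)^n).
    + intros n. rewrite dd_S by auto.
      pose proof (dd_pos q n Hq). pose proof (pow_ge2 q n Hq).
      replace (dd q n / (q ^ S n - 1) / dd q n) with (/ (q ^ S n - 1)) by (field; lra).
      rewrite Rabs_pos_eq by (left; apply Rinv_0_lt_compat; lra).
      split. left; apply Rinv_0_lt_compat; lra.
      rewrite <- Rinv_pow by lra. apply Rinv_le_contravar. apply pow_lt; lra.
      assert (2 ^ n <= q ^ n) by (apply pow_incr; lra).
      assert (1 <= 2 ^ n) by (apply pow_R1_Rle; lra).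
      simpl. nra.
    + apply is_lim_seq_const.
    + apply is_lim_seq_geom. rewrite Rabs_pos_eq; lra.
Qed.

Lemma ex_dd q x : 2 <= q -> ex_series (fun n => dd q n * x ^ n).
Proof. intros Hq. apply ex_pseries_R. apply CV_radius_inside. rewrite CV_dd; auto. exact I. Qed.

Lemma is_ff q x : 2 <= q -> is_series (fun n => dd q n * x ^ n) (ff q x).
Proof. intros Hq. apply Series_correct, ex_dd; auto. Qed.

Lemma is_series_plusR (a b : nat -> R) la lb :
  is_series a la -> is_series b lb -> is_series (fun n => a n + b n) (la + lb).
Proof. intros H1 H2. exact (@is_series_plus R_AbsRing R_NormedModule a b la lb H1 H2). Qed.
Lemma is_series_minusR (a b : nat -> R) la lb :
  is_series a la -> is_series b lb -> is_series (fun n => a n - b n) (la - lb).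
Proof. intros H1 H2. exact (@is_series_minus R_AbsRing R_NormedModule a b la lb H1 H2). Qed.
Lemma is_series_scalR (c : R) (a : nat -> R) la :
  is_series a la -> is_series (fun n => c * a n) (c * la).
Proof. intros H1. exact (@is_series_scal R_AbsRing R_NormedModule c a la H1). Qed.

Lemma is_series_decr_1R (a : nat -> R) l :
  is_series (fun k => a (S k)) (l - a O) -> is_series a l.
Proof. intros H. exact (@is_series_decr_1 R_AbsRing R_NormedModule a l H). Qed.

Lemma is_series_extR (a b : nat -> R) l :
  (forall n, a n = b n) -> is_series a l -> is_series b l.
Proof. intros H1 H2. exact (@is_series_ext R_AbsRing R_NormedModule a b l H1 H2). Qed.

Lemma ff_func q y : 2 <= q -> ff q (q * y) = (1 + y) * ff q y.
Proof.
  intros Hq. apply is_series_unique.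
  set (t := fun n => match n with O => 0 | S k => y * (dd q k * y ^ k) end).
  assert (Ht : is_series t (y * ff q y)).
  { apply is_series_decr_1R. simpl t. rewrite Rminus_0_r.
    apply is_series_scalR, is_ff; auto. }
  replace ((1 + y) * ff q y) with (ff q y + y * ff q y) by ring.
  eapply is_series_extR. 2: apply is_series_plusR; [apply is_ff; auto | exact Ht].
  intros [|n]; simpl t. simpl pow. ring.
  rewrite dd_S by auto. pose proof (pow_ge2 q n Hq). unfold dd.
  pose proof (cc_pos q n Hq).
  rewrite Rpow_mult_distr. change (y ^ S n) with (y * y ^ n). field. split; lra.
Qed.


Fixpoint PP (q : R) (n k : nat) (u : R) : R :=
  match k with O => 1 | S k' => PP q n k' u * (u - q ^ (n + S k')) end.
Fixpoint AA (q : R) (n k : nat) (y : R) : R :=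
  match k with O => 1 | S k' => (1 + y) * AA q n k' (q * y) - q ^ (n + S k') * AA q n k' y end.

Lemma Pade_series q n k y : 2 <= q ->
  is_series (fun M => dd q M * PP q n k (q ^ M) * y ^ M) (AA q n k y * ff q y).
Proof.
  intros Hq. revert y. induction k as [|k IH]; intros y.
  - simpl AA. rewrite Rmult_1_l. eapply is_series_extR. 2: apply is_ff; auto. intros; simpl; ring.
  - simpl AA. 
    replace (((1 + y) * AA q n k (q * y) - q ^ (n + S k) * AA q n k y) * ff q y)
      with (AA q n k (q * y) * ff q (q * y) - q ^ (n + S k) * (AA q n k y * ff q y))
      by (rewrite ff_func by auto; ring).
    eapply is_series_extR. 2: apply is_series_minusR; [apply IH | apply is_series_scalR, IH].
    intros M. cbv beta. simpl PP. rewrite Rpow_mult_distr. ring.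
Qed.

Lemma PP_vanish q n k j : (1 <= j <= k)%nat -> PP q n k (q ^ (n + j)) = 0.
Proof.
  induction k as [|k IH]; intros Hj. lia.
  simpl PP. destruct (Nat.eq_dec j (S k)) as [->|Hne]. ring.
  rewrite IH by lia. ring.
Qed.

Lemma PP_low q s M k : PP q (s + M) k (q ^ M) * cc q s = (- q ^ M) ^ k * cc q (s + k).
Proof.
  induction k as [|k IH]. simpl. rewrite Nat.add_0_r. ring.
  simpl PP. replace (s + S k)%nat with (S (s + k)) by lia. rewrite cc_S.
  replace (PP q (s + M) k (q ^ M) * (q ^ M - q ^ (s + M + S k)) * cc q s)
    with (PP q (s + M) k (q ^ M) * cc q s * (q ^ M - q ^ (s + M + S k))) by ring.
  rewrite IH. replace (s + M + S k)%nat with (M + S (s + k))%nat by lia.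
  rewrite pow_add. simpl pow. ring.
Qed.

Lemma coef_int q n M : isZ q -> 2 <= q -> (M <= n)%nat -> isZ (dd q M * PP q n n (q ^ M)).
Proof.
  intros Hz Hq HM. set (s := (n - M)%nat). replace n with (s + M)%nat at 1 2 by lia.
  assert (Hs : 0 < cc q s) by (apply cc_pos; auto).
  assert (HMp : 0 < cc q M) by (apply cc_pos; auto).
  pose proof (PP_low q s M (s + M)) as E.
  destruct (cc_G q s (s + M) Hz Hq) as [z1 H1].
  destruct (cc_G q M s Hz Hq) as [z2 H2].
  replace (M + s)%nat with (s + M)%nat in H2 by lia.
  assert (PP q (s + M) (s + M) (q ^ M) = (- q ^ M) ^ (s + M) * (IZR z1 * IZR z2 * cc q M * cc q s)).
  { apply (Rmult_eq_reg_r (cc q s)). 2: lra. rewrite E, H1, H2. ring. }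
  rewrite H. unfold dd.
  replace (/ cc q M * ((- q ^ M) ^ (s + M) * (IZR z1 * IZR z2 * cc q M * cc q s)))
    with ((- q ^ M) ^ (s + M) * (IZR z1 * IZR z2 * cc q s)) by (field; lra).
  repeat apply isZ_mult; try apply isZ_IZR. apply isZ_pow, isZ_opp, isZ_pow; auto.
  apply isZ_cc; auto.
Qed.

Lemma AA_int q n k a B : isZ q -> isZ a -> isZ B -> B <> 0 -> isZ (B ^ k * AA q n k (a / B)).
Proof.
  intros Hq. revert a. induction k as [|k IH]; intros a Ha HB HB0.
  - simpl. apply isZ_mult; [apply isZ_1|apply isZ_1].
  - simpl AA.
    replace (q * (a / B)) with ((q * a) / B) by (field; auto).
    replace (B ^ S k * ((1 + a / B) * AA q n k (q * a / B) - q ^ (n + S k) * AA q n k (a / B)))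
      with ((B + a) * (B ^ k * AA q n k (q * a / B)) - q ^ (n + S k) * B * (B ^ k * AA q n k (a / B)))
      by (simpl; field; auto).
    apply isZ_minus; apply isZ_mult.
    + apply isZ_plus; auto.
    + apply IH; auto. apply isZ_mult; auto.
    + apply isZ_mult; auto. apply isZ_pow; auto.
    + apply IH; auto.
Qed.

Lemma PP_bound q n k M : 2 <= q -> (n + k < M)%nat ->
  0 < PP q n k (q ^ M) <= (q ^ M) ^ k.
Proof.
  intros Hq. induction k as [|k IH]; intros HM. simpl; lra.
  simpl PP. simpl pow. destruct IH as [H1 H2]; [lia|].
  assert (q ^ (n + S k) < q ^ M) by (apply Rlt_pow; lia || lra).
  assert (0 < q ^ (n + S k)) by (apply pow_lt; lra).
  split. apply Rmult_lt_0_compat; lra.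
  rewrite (Rmult_comm (q ^ M)). apply Rmult_le_compat; lra.
Qed.

Lemma PP_ratio q n k M : 2 <= q -> (n + k < M)%nat ->
  PP q n k (q ^ S M) <= (2 * q) ^ k * PP q n k (q ^ M).
Proof.
  intros Hq. induction k as [|k IH]; intros HM. simpl; lra.
  simpl PP. change ((2 * q) ^ S k) with ((2 * q) * (2 * q) ^ k).
  pose proof (PP_bound q n k (S M) Hq ltac:(lia)) as [B1 _].
  pose proof (PP_bound q n k M Hq ltac:(lia)) as [B2 _].
  specialize (IH ltac:(lia)).
  set (i := (n + S k)%nat) in *.
  assert (qi1 : q ^ S i <= q ^ M) by (apply Rle_pow; lia || lra).
  assert (0 < q ^ i) by (apply pow_lt; lra).
  assert (q ^ i < q ^ M) by (apply Rlt_pow; lia || lra).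
  assert (E1 : q ^ S M = q * q ^ M) by reflexivity.
  assert (E2 : q ^ S i = q * q ^ i) by reflexivity.
  rewrite E2 in qi1. rewrite E1 in IH, B1.
  assert (F : q * q ^ M - q ^ i <= 2 * q * (q ^ M - q ^ i)) by nra.
  assert (0 <= q * q ^ M - q ^ i) by nra.
  apply Rle_trans with (((2 * q) ^ k * PP q n k (q ^ M)) * (2 * q * (q ^ M - q ^ i))).
  apply Rmult_le_compat; lra. right; ring.
Qed.

Lemma aux1 q X : 2 <= q -> 1 <= X -> q * X <= q * (q * X) - 1.
Proof. intros. assert (2 <= q * X) by nra. nra. Qed.
Lemma aux2 q X : 2 <= q -> 1 <= X -> X <= q * X - 1.
Proof. intros; nra. Qed.

Lemma cc_big q n : 2 <= q -> (q ^ (2 * n + 1)) ^ n <= cc q (2 * n + 1).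
Proof.
  intros Hq. induction n as [|n IH]. simpl; lra.
  replace (2 * S n + 1)%nat with (S (S (2 * n + 1))) by lia.
  rewrite !cc_S.
  rewrite <- pow_mult. rewrite <- pow_mult in IH.
  replace (S (S (2 * n + 1)) * S n)%nat with ((2 * n + 1) * n + (2 * n + 1) + S (2 * n + 1))%nat by nia.
  rewrite (pow_add q ((2 * n + 1) * n + (2 * n + 1))), (pow_add q ((2 * n + 1) * n)).
  assert (1 <= q ^ (2 * n + 1)) by (apply pow_R1_Rle; lra).
  assert (A1 : q ^ S (2 * n + 1) <= q ^ S (S (2 * n + 1)) - 1).
  { change (q ^ S (S (2 * n + 1))) with (q * (q * q ^ (2 * n + 1))).
    change (q ^ S (2 * n + 1)) with (q * q ^ (2 * n + 1)). apply aux1; auto. }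
  assert (A3 : q ^ (2 * n + 1) <= q ^ S (2 * n + 1) - 1).
  { change (q ^ S (2 * n + 1)) with (q * q ^ (2 * n + 1)). apply aux2; auto. }
  assert (0 <= q ^ ((2 * n + 1) * n)) by (apply pow_le; lra).
  assert (0 <= q ^ S (2 * n + 1)) by (apply pow_le; lra).
  set (X1 := q ^ ((2 * n + 1) * n)) in *. set (X2 := q ^ (2 * n + 1)) in *.
  set (X3 := q ^ S (2 * n + 1)) in *. set (X4 := q ^ S (S (2 * n + 1))) in *.
  apply Rmult_le_compat.
  apply Rmult_le_pos; lra. lra. 2: exact A1.
  apply Rmult_le_compat; lra.
Qed.


Definition TT q n y M := dd q M * PP q n n (q ^ M) * y ^ M.

Lemma aux3 X Y z W : 1 <= X -> 4 * X <= W -> 0 <= z <= /2 -> 0 <= Y <= X ->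
  Y * z / (W - 1) <= /4.
Proof.
  intros. assert (0 < W - 1) by lra.
  apply Rmult_le_reg_r with (W - 1); auto. unfold Rdiv. rewrite Rmult_assoc, Rinv_l by lra. nra.
Qed.

Lemma aux4 d W P' c P z Yn : 0 < d -> 2 <= W -> 0 < P' -> P' <= c * P -> 0 <= z -> 0 <= Yn ->
  0 < P -> c * z / (W - 1) <= / 4 -> d / (W - 1) * P' * (z * Yn) <= / 4 * (d * P * Yn).
Proof.
  intros. apply Rle_trans with ((c * z / (W - 1)) * (d * P * Yn)).
  - replace (c * z / (W - 1) * (d * P * Yn)) with (d / (W - 1) * (c * P) * (z * Yn)) by (field; lra).
    apply Rmult_le_compat_r. nra. apply Rmult_le_compat_l; auto.
    apply Rlt_le, Rdiv_lt_0_compat; lra.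
  - apply Rmult_le_compat_r; auto. apply Rmult_le_pos; auto. nra.
Qed.

Lemma TT_ratio q n y M : 2 <= q -> Rabs y <= /2 -> (2 * n < M)%nat ->
  Rabs (TT q n y (S M)) <= /4 * Rabs (TT q n y M).
Proof.
  intros Hq Hy HM. unfold TT.
  pose proof (PP_bound q n n M Hq ltac:(lia)) as [P1 _].
  pose proof (PP_bound q n n (S M) Hq ltac:(lia)) as [P2 _].
  pose proof (PP_ratio q n n M Hq ltac:(lia)) as PR.
  pose proof (dd_pos q M Hq). rewrite dd_S by auto.
  pose proof (pow_ge2 q M Hq).
  rewrite !Rabs_mult, <- !RPow_abs.
  rewrite (Rabs_pos_eq (dd q M)) by lra. rewrite (Rabs_pos_eq (PP q n n (q ^ M))) by lra.
  rewrite (Rabs_pos_eq (PP q n n (q ^ S M))) by lra.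
  rewrite Rabs_pos_eq by (apply Rlt_le, Rdiv_lt_0_compat; lra).
  assert (E : (2 * q) ^ n <= q ^ (2 * n)).
  { rewrite pow_mult. apply pow_incr. replace (q ^ 2) with (q * q) by ring. clear -Hq. split; nra. }
  assert (E2 : 4 * q ^ (2 * n) <= q ^ S M).
  { apply Rle_trans with (q ^ (S (S (2 * n)))). change (q ^ (S (S (2 * n)))) with (q * (q * q ^ (2 * n))).
    assert (Hp : 0 <= q ^ (2 * n)) by (apply pow_le; lra). clear -Hq Hp. assert (4 <= q * q) by nra. nra.
    apply Rle_pow; lia || lra. }
  assert (E3 : 1 <= q ^ (2 * n)) by (apply pow_R1_Rle; lra).
  assert (E4 : 0 <= (2 * q) ^ n) by (apply pow_le; lra).
  pose proof (aux3 (q ^ (2 * n)) ((2 * q) ^ n) (Rabs y) (q ^ S M) E3 E2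
     ltac:(split; [apply Rabs_pos|auto]) ltac:(split; auto)) as K.
  set (W := q ^ S M) in *. set (Yn := Rabs y ^ M).
  assert (0 <= Yn) by (apply pow_le, Rabs_pos).
  change (Rabs y ^ S M) with (Rabs y * Yn).
  apply aux4 with ((2 * q) ^ n); auto; try lra. apply Rabs_pos.
Qed.


Lemma TT0_bound q n y : 2 <= q -> Rabs (TT q n y (2 * n + 1)) <= Rabs y ^ (2 * n + 1).
Proof.
  intros Hq. unfold TT. rewrite !Rabs_mult, <- RPow_abs.
  pose proof (PP_bound q n n (2 * n + 1) Hq ltac:(lia)) as [P1 P2].
  pose proof (cc_big q n Hq). pose proof (cc_pos q (2 * n + 1) Hq).
  rewrite (Rabs_pos_eq (dd q _)) by (apply Rlt_le, dd_pos; auto).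
  rewrite (Rabs_pos_eq (PP _ _ _ _)) by lra.
  assert (dd q (2 * n + 1) * PP q n n (q ^ (2 * n + 1)) <= 1).
  { unfold dd. apply Rmult_le_reg_l with (cc q (2 * n + 1)); auto.
    rewrite <- Rmult_assoc, Rinv_r by lra. lra. }
  assert (0 <= Rabs y ^ (2 * n + 1)) by (apply pow_le, Rabs_pos).
  assert (0 <= dd q (2 * n + 1) * PP q n n (q ^ (2 * n + 1))) by (pose proof (dd_pos q (2*n+1) Hq); nra).
  nra.
Qed.

Lemma TT0_nz q n y : 2 <= q -> y <> 0 -> TT q n y (2 * n + 1) <> 0.
Proof.
  intros Hq Hy. unfold TT.
  pose proof (PP_bound q n n (2 * n + 1) Hq ltac:(lia)) as [P1 P2].
  pose proof (dd_pos q (2 * n + 1) Hq).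
  repeat apply Rmult_integral_contrapositive_currified; try lra. apply pow_nonzero; auto.
Qed.

Lemma geom_dom (a : nat -> R) : (forall k, Rabs (a (S k)) <= /4 * Rabs (a k)) ->
  forall k, Rabs (a k) <= Rabs (a O) * (/4) ^ k.
Proof.
  intros H k. induction k. simpl; lra.
  apply Rle_trans with (/4 * Rabs (a k)); auto. simpl.
  assert (0 <= (/4)^k) by (apply pow_le; lra). nra.
Qed.

Lemma series_up (a : nat -> R) : (forall k, Rabs (a (S k)) <= /4 * Rabs (a k)) ->
  ex_series a /\ Rabs (Series a) <= 4 / 3 * Rabs (a O).
Proof.
  intros H. pose proof (geom_dom a H) as G.
  assert (Hg : is_series (fun k => Rabs (a O) * (/4) ^ k) (Rabs (a O) * / (1 - /4))).
  { apply is_series_scalR. apply is_series_geom. rewrite Rabs_pos_eq; lra. }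
  assert (Ea : ex_series (fun n => Rabs (a n))).
  { apply (@ex_series_le R_AbsRing R_CompleteNormedModule _ (fun k => Rabs (a O) * (/4) ^ k)).
    intros n. change (norm (Rabs (a n))) with (Rabs (Rabs (a n))). rewrite Rabs_Rabsolu. apply G.
    eexists; exact Hg. }
  split. apply ex_series_Rabs; auto.
  apply Rle_trans with (Series (fun n => Rabs (a n))). apply Series_Rabs; auto.
  apply Rle_trans with (Series (fun k => Rabs (a O) * (/4) ^ k)).
  apply Series_le. intros n; split; [apply Rabs_pos|apply G]. eexists; exact Hg.
  rewrite (is_series_unique _ _ Hg). right; field.
Qed.

Lemma series_tail (a : nat -> R) : (forall k, Rabs (a (S k)) <= /4 * Rabs (a k)) -> a O <> 0 ->
  0 < Rabs (Series a) <= 4 / 3 * Rabs (a O).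
Proof.
  intros H H0. destruct (series_up a H) as [Ex Up]. split; auto.
  rewrite Series_incr_1 by auto.
  destruct (series_up (fun k => a (S k)) (fun k => H (S k))) as [_ Up2].
  pose proof (H O). pose proof (Rabs_pos_lt _ H0).
  pose proof (Rabs_triang_inv (a O) (- Series (fun k => a (S k)))).
  rewrite Rabs_Ropp in H3. unfold Rminus in H3. rewrite Ropp_involutive in H3.
  lra.
Qed.

Lemma Bpow_div a B n M : B <> 0 -> (M <= n)%nat -> B ^ n * (a / B) ^ M = a ^ M * B ^ (n - M).
Proof.
  intros HB HM. replace n with (M + (n - M))%nat at 1 by lia. rewrite pow_add.
  unfold Rdiv. rewrite Rpow_mult_distr, pow_inv. field. apply pow_nonzero; auto.
Qed.

Lemma TT_int q n a B M : isZ q -> 2 <= q -> isZ a -> isZ B -> B <> 0 -> (M <= 2 * n)%nat ->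
  isZ (B ^ n * TT q n (a / B) M).
Proof.
  intros Hz Hq Ha HB HB0 HM. unfold TT.
  destruct (Compare_dec.le_lt_dec M n) as [Hle|Hlt].
  - replace (B ^ n * (dd q M * PP q n n (q ^ M) * (a / B) ^ M))
      with ((dd q M * PP q n n (q ^ M)) * (B ^ n * (a / B) ^ M)) by ring.
    rewrite Bpow_div by auto. apply isZ_mult. apply coef_int; auto.
    apply isZ_mult; apply isZ_pow; auto.
  - replace M with (n + (M - n))%nat by lia. rewrite PP_vanish by lia.
    replace (B ^ n * (dd q (n + (M - n)) * 0 * (a / B) ^ (n + (M - n)))) with 0 by ring.
    apply isZ_0.
Qed.

Lemma sum_int q n a B N : isZ q -> 2 <= q -> isZ a -> isZ B -> B <> 0 -> (N <= 2 * n)%nat ->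
  isZ (B ^ n * sum_f_R0 (TT q n (a / B)) N).
Proof.
  intros Hz Hq Ha HB HB0. induction N as [|N IH]; intros HN.
  - change (sum_f_R0 (TT q n (a / B)) 0) with (TT q n (a / B) 0). apply TT_int; auto; lia.
  - rewrite tech5, Rmult_plus_distr_l. apply isZ_plus. apply IH; lia. apply TT_int; auto.
Qed.

Lemma main_irr q a B V : isZ q -> 2 <= q -> isZ a -> isZ B -> 0 < B -> a <> 0 ->
  a ^ 2 + 1 <= B -> isZ V -> V <> 0 -> isZ (V * ff q (a / B)) -> False.
Proof.
  intros Hz Hq Ha HB HB0 Ha0 HaB HV HV0 HVf.
  set (y := a / B) in *.
  assert (Hy0 : y <> 0) by (unfold y; intro H; apply Ha0; unfold Rdiv in H;
     apply Rmult_integral in H; destruct H; auto; exfalso; apply (Rinv_neq_0_compat B); lra).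
  assert (Hy : Rabs y <= /2).
  { unfold y. rewrite Rabs_div by lra. rewrite (Rabs_pos_eq B) by lra.
    apply Rmult_le_reg_r with B; auto. unfold Rdiv. rewrite Rmult_assoc, Rinv_l by lra.
    pose proof (pow2_abs a) as E. rewrite <- E in HaB. 
    pose proof (pow2_ge_0 (Rabs a - 1)). set (u := Rabs a) in *. 
    replace (u ^ 2) with (u * u) in HaB by ring. replace ((u - 1) ^ 2) with ((u-1)*(u-1)) in H by ring. lra. }
  set (rho := a ^ 2 / B).
  assert (Hrho : 0 <= rho < 1).
  { unfold rho. split. apply Rmult_le_pos. apply pow2_ge_0. left; apply Rinv_0_lt_compat; auto.
    apply Rmult_lt_reg_r with B; auto. unfold Rdiv. rewrite Rmult_assoc, Rinv_l by lra. lra. }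
  set (K := 4 / 3 * Rabs V * Rabs y).
  assert (HK : 0 <= K) by (unfold K; pose proof (Rabs_pos V); pose proof (Rabs_pos y); 
     apply Rmult_le_pos; [apply Rmult_le_pos|]; lra).
  destruct (pow_lt_1_zero rho ltac:(rewrite Rabs_pos_eq; lra) (/ (K + 1))
     ltac:(apply Rinv_0_lt_compat; lra)) as [n Hn].
  specialize (Hn n (le_n n)). rewrite Rabs_pos_eq in Hn by (apply pow_le; lra).
  pose proof (Pade_series q n n y Hq) as PS. change (is_series (TT q n y) (AA q n n y * ff q y)) in PS.
  assert (Ex : ex_series (TT q n y)) by (eexists; exact PS).
  pose proof (Series_incr_n (TT q n y) (2 * n + 1) ltac:(lia) Ex) as Split.
  rewrite (is_series_unique _ _ PS) in Split.
  replace (Init.Nat.pred (2 * n + 1)) with (2 * n)%nat in Split by lia.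
  set (Rt := Series (fun k => TT q n y (2 * n + 1 + k))) in *.
  assert (Tl : 0 < Rabs Rt <= 4 / 3 * Rabs (TT q n y (2 * n + 1 + 0))).
  { apply series_tail.
    - intros k. replace (2 * n + 1 + S k)%nat with (S (2 * n + 1 + k)) by lia.
      apply TT_ratio; auto. lia.
    - rewrite Nat.add_0_r. apply TT0_nz; auto. }
  rewrite Nat.add_0_r in Tl.
  pose proof (TT0_bound q n y Hq) as T0.
  set (I := V * B ^ n * Rt).
  assert (HI : isZ I).
  { unfold I. replace Rt with (AA q n n y * ff q y - sum_f_R0 (TT q n y) (2 * n)) by lra.
    replace (V * B ^ n * (AA q n n y * ff q y - sum_f_R0 (TT q n y) (2 * n)))
      with ((V * ff q y) * (B ^ n * AA q n n y) - V * (B ^ n * sum_f_R0 (TT q n y) (2 * n))) by ring.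
    apply isZ_minus. apply isZ_mult; auto. apply AA_int; auto; lra.
    apply isZ_mult; auto. apply sum_int; auto; lra. }
  assert (Hb : Rabs I < 1).
  { unfold I. rewrite !Rabs_mult. rewrite <- RPow_abs. rewrite (Rabs_pos_eq B) by lra.
    assert (E : B ^ n * Rabs y ^ (2 * n + 1) = Rabs y * rho ^ n).
    { rewrite pow_add, pow_mult. unfold rho, y.
      rewrite pow2_abs. rewrite pow_1.
      replace (B ^ n * (((a / B) ^ 2) ^ n * Rabs (a / B))) with (Rabs (a / B) * (B * (a / B) ^ 2) ^ n)
        by (rewrite Rpow_mult_distr; ring).
      f_equal. f_equal. field. lra. }
    assert (0 <= B ^ n) by (apply pow_le; lra).
    assert (0 <= Rabs V) by apply Rabs_pos.
    apply Rle_lt_trans with (Rabs V * (B ^ n * (4 / 3 * Rabs y ^ (2 * n + 1)))).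
    - rewrite <- Rmult_assoc. apply Rmult_le_compat_l. nra. lra.
    - replace (Rabs V * (B ^ n * (4 / 3 * Rabs y ^ (2 * n + 1)))) with (K * rho ^ n).
      2:{ unfold K. transitivity (Rabs V * (4 / 3) * (B ^ n * Rabs y ^ (2 * n + 1))). rewrite E; ring. ring. }
      apply Rle_lt_trans with (K * / (K + 1)). apply Rmult_le_compat_l; lra.
      apply Rmult_lt_reg_r with (K + 1). lra. rewrite Rmult_assoc, Rinv_l by lra. lra. }
  pose proof (isZ_small I HI Hb) as I0.
  unfold I in I0. apply Rmult_integral in I0. destruct I0 as [I0|I0].
  - apply Rmult_integral in I0. destruct I0 as [I0|I0]. auto.
    apply (pow_nonzero B n); lra.
  - rewrite I0 in Tl. rewrite Rabs_R0 in Tl. lra.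
Qed.

Fixpoint EE (q : R) (m : nat) (y : R) : R :=
  match m with O => 1 | S m' => EE q m' y * (1 + q ^ m' * y) end.

Lemma ff_iter q m y : 2 <= q -> ff q (q ^ m * y) = EE q m y * ff q y.
Proof.
  intros Hq. induction m as [|m IH]. simpl. rewrite Rmult_1_l; ring.
  replace (q ^ S m * y) with (q * (q ^ m * y)) by (simpl; ring).
  rewrite ff_func by auto. rewrite IH. simpl EE. ring.
Qed.

Lemma EE_int q m a B : isZ q -> isZ a -> isZ B -> B <> 0 -> isZ (B ^ m * EE q m (a / B)).
Proof.
  intros Hq Ha HB HB0. induction m as [|m IH]. simpl. rewrite Rmult_1_l. apply isZ_1.
  simpl EE. replace (B ^ S m * (EE q m (a / B) * (1 + q ^ m * (a / B))))
    with ((B ^ m * EE q m (a / B)) * (B + q ^ m * a)) by (simpl; field; auto).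
  apply isZ_mult; auto. apply isZ_plus; auto. apply isZ_mult; auto. apply isZ_pow; auto.
Qed.

Lemma pow_unbounded q X : 2 <= q -> exists m, X <= q ^ m.
Proof.
  intros Hq. destruct (INR_unbounded X) as [m Hm]. exists m.
  assert (forall k, INR k <= q ^ k).
  { induction k. simpl; lra. rewrite S_INR. change (q ^ S k) with (q * q ^ k).
    assert (1 <= q ^ k) by (apply pow_R1_Rle; lra). set (Z := q ^ k) in *. nra. }
  specialize (H m). lra.
Qed.

Lemma isZ_pos_ge1 b : isZ b -> 0 < b -> 1 <= b.
Proof. intros [z ->] H. apply lt_IZR in H. apply IZR_le. lia. Qed.

Lemma part1_int q a0 b0 V0 : isZ q -> 2 <= q -> isZ a0 -> isZ b0 -> 0 < b0 -> a0 <> 0 ->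
  ff q (a0 / b0) <> 0 -> isZ V0 -> V0 <> 0 -> isZ (V0 * ff q (a0 / b0)) -> False.
Proof.
  intros Hz Hq Ha Hb Hb0 Ha0 Hf HV HV0 HVf.
  destruct (pow_unbounded q (a0 ^ 2 + 1) Hq) as [m Hm].
  set (B := b0 * q ^ m).
  assert (Hqm : 1 <= q ^ m) by (apply pow_R1_Rle; lra).
  assert (HB0 : 0 < B) by (unfold B; apply Rmult_lt_0_compat; lra).
  assert (HBZ : isZ B) by (apply isZ_mult; auto; apply isZ_pow; auto).
  assert (Ex : a0 / b0 = q ^ m * (a0 / B)) by (unfold B; field; split; lra).
  rewrite Ex in Hf, HVf. rewrite ff_iter in Hf, HVf by auto.
  assert (HE : EE q m (a0 / B) <> 0) by (intro H; apply Hf; rewrite H; ring).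
  apply (main_irr q a0 B (V0 * (B ^ m * EE q m (a0 / B)))); auto.
  - unfold B. pose proof (isZ_pos_ge1 b0 Hb Hb0). pose proof (pow2_ge_0 a0).
    set (Z := q ^ m) in *. nra.
  - apply isZ_mult; auto. apply EE_int; auto; lra.
  - apply Rmult_integral_contrapositive_currified; auto.
    apply Rmult_integral_contrapositive_currified; auto. apply pow_nonzero; lra.
  - replace (V0 * (B ^ m * EE q m (a0 / B)) * ff q (a0 / B))
      with (V0 * (EE q m (a0 / B) * ff q (a0 / B)) * B ^ m) by ring.
    apply isZ_mult; auto. apply isZ_pow; auto.
Qed.

Lemma qfact_eq Q n : Q <> 1 -> qfact Q n = cc Q n / (Q - 1) ^ n.
Proof.
  intros HQ. induction n as [|n IH]. simpl. field.
  simpl qfact. rewrite IH. unfold qnum. rewrite cc_S.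
  change ((Q - 1) ^ S n) with ((Q - 1) * (Q - 1) ^ n).
  assert ((Q - 1) ^ n <> 0) by (apply pow_nonzero; lra).
  field. split; auto; lra.
Qed.

Lemma qexp_ff Q z : 2 <= Q -> qexp Q z = ff Q ((Q - 1) * z).
Proof.
  intros HQ. unfold qexp, ff, PSeries. apply Series_ext. intros n.
  rewrite qfact_eq by lra. rewrite Rpow_mult_distr. unfold dd.
  pose proof (cc_pos Q n HQ). assert ((Q - 1) ^ n <> 0) by (apply pow_nonzero; lra).
  field. split; lra.
Qed.

Lemma Rinv_lt_1 Q : 1 < Q -> / Q < 1.
Proof. intros. rewrite <- Rinv_1. apply Rinv_lt_contravar; lra. Qed.

Lemma pow_le1 x n : 0 <= x <= 1 -> x ^ n <= 1.
Proof. intros H. induction n. simpl; lra. simpl. set (Z := x ^ n) in *.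
  assert (0 <= Z) by (apply pow_le; lra). nra. Qed.

Definition gg Q n := / qfact (/ Q) n.

Lemma qnumi_pos Q k : 2 <= Q -> 0 < qnum (/ Q) (S k).
Proof.
  intros HQ. unfold qnum.
  assert (0 < / Q < 1) by (split; [apply Rinv_0_lt_compat; lra | apply Rinv_lt_1; lra]).
  assert ((/ Q) ^ S k <= / Q).
  { change ((/ Q) ^ S k) with (/ Q * (/ Q) ^ k). assert ((/Q)^k <= 1) by (apply pow_le1; lra).
    set (Z := (/Q)^k) in *. assert (0 <= Z) by (apply pow_le; lra). nra. }
  set (Z := (/ Q) ^ S k) in *. apply Rdiv_lt_0_compat; lra.
Qed.

Lemma qfacti_pos Q n : 2 <= Q -> 0 < qfact (/ Q) n.
Proof. intros HQ. induction n. simpl; lra. simpl qfact. apply Rmult_lt_0_compat; auto.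
  apply qnumi_pos; auto. Qed.

Lemma gg_S Q n : 2 <= Q -> gg Q (S n) * (1 - (/ Q) ^ S n) = (1 - / Q) * gg Q n.
Proof.
  intros HQ. unfold gg. simpl qfact. pose proof (qfacti_pos Q n HQ).
  pose proof (qnumi_pos Q n HQ). unfold qnum in *.
  assert (0 < / Q < 1) by (split; [apply Rinv_0_lt_compat; lra | apply Rinv_lt_1; lra]).
  assert (1 - (/ Q) ^ S n <> 0).
  { intro E. rewrite E in H0. unfold Rdiv in H0. rewrite Rmult_0_l in H0. lra. }
  field. repeat split; lra.
Qed.

Lemma gg_pos Q n : 2 <= Q -> 0 < gg Q n.
Proof. intros; unfold gg; apply Rinv_0_lt_compat, qfacti_pos; auto. Qed.

Lemma CV_gg Q : 2 <= Q -> Rbar_lt 1 (CV_radius (gg Q)).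
Proof.
  intros HQ.
  assert (Hi : 0 < / Q < 1) by (split; [apply Rinv_0_lt_compat; lra | apply Rinv_lt_1; lra]).
  rewrite (CV_radius_finite_DAlembert _ (1 - / Q)).
  - simpl. rewrite <- Rinv_1 at 1. apply Rinv_lt_contravar; lra.
  - intros n; apply Rgt_not_eq, gg_pos; auto.
  - lra.
  - apply is_lim_seq_ext with (fun n => (1 - / Q) * / (1 - (/ Q) ^ S n)).
    + intros n. pose proof (gg_S Q n HQ). pose proof (gg_pos Q n HQ). pose proof (gg_pos Q (S n) HQ).
      assert (Hp : (/ Q) ^ S n < 1).
      { change ((/ Q) ^ S n) with (/ Q * (/ Q) ^ n). assert ((/Q)^n <= 1) by (apply pow_le1; lra).
        set (Z := (/Q)^n) in *. assert (0 <= Z) by (apply pow_le; lra). nra. }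
      set (Z := (/ Q) ^ S n) in *.
      rewrite Rabs_pos_eq by (apply Rlt_le, Rdiv_lt_0_compat; auto).
      assert (E : gg Q (S n) = (1 - / Q) * gg Q n / (1 - Z)).
      { rewrite <- H. field. lra. }
      rewrite E. field. split; lra.
    + assert (Hinv : is_lim_seq (fun n => / (1 - (/ Q) ^ S n)) (Rbar_inv (Finite (1 - 0)))).
      { apply is_lim_seq_inv. 2: simpl; intro E; injection E; lra.
        apply is_lim_seq_minus'. apply is_lim_seq_const.
        apply (is_lim_seq_incr_1 (fun n => (/ Q) ^ n)). apply is_lim_seq_geom.
        rewrite Rabs_pos_eq; lra. }
      pose proof (is_lim_seq_scal_l _ (1 - / Q) _ Hinv) as L. simpl in L.
      replace ((1 - / Q) * / (1 - 0)) with (1 - / Q) in L by (field; lra). exact L.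
Qed.

Definition HH Q x := PSeries (gg Q) x.
Definition GG Q x := ff Q ((Q - 1) * - x).

Lemma qexp_HH Q x : 2 <= Q -> qexp (/ Q) x = HH Q x.
Proof.
  intros HQ. unfold qexp, HH, PSeries, gg. apply Series_ext. intros n.
  pose proof (qfacti_pos Q n HQ). field. lra.
Qed.

Lemma in_gg Q x : 2 <= Q -> Rabs x < 1 -> Rbar_lt (Rabs x) (CV_radius (gg Q)).
Proof.
  intros HQ Hx. pose proof (CV_gg Q HQ). destruct (CV_radius (gg Q)); simpl in *; auto; lra.
Qed.

Lemma HH_func Q x : 2 <= Q -> Rabs x < 1 -> HH Q (x / Q) = (1 - (1 - / Q) * x) * HH Q x.
Proof.
  intros HQ Hx.
  assert (Hx2 : Rabs (x / Q) < 1).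
  { unfold Rdiv. rewrite Rabs_mult, (Rabs_pos_eq (/ Q)) by (apply Rlt_le, Rinv_0_lt_compat; lra).
    assert (/ Q < 1) by (apply Rinv_lt_1; lra). assert (0 < / Q) by (apply Rinv_0_lt_compat; lra).
    pose proof (Rabs_pos x). nra. }
  assert (S1 : is_series (fun n => gg Q n * x ^ n) (HH Q x)).
  { apply Series_correct. apply ex_pseries_R, CV_radius_inside, in_gg; auto. }
  assert (S2 : is_series (fun n => gg Q n * (x / Q) ^ n) (HH Q (x / Q))).
  { apply Series_correct. apply ex_pseries_R, CV_radius_inside, in_gg; auto. }
  set (t := fun n => match n with O => 0 | S k => (1 - / Q) * x * (gg Q k * x ^ k) end).
  assert (St : is_series t ((1 - / Q) * x * HH Q x)).
  { apply is_series_decr_1R. simpl t. rewrite Rminus_0_r. apply is_series_scalR. auto. }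
  assert (S3 : is_series (fun n => gg Q n * x ^ n) (HH Q (x / Q) + (1 - / Q) * x * HH Q x)).
  { eapply is_series_extR. 2: apply is_series_plusR; [exact S2 | exact St].
    intros [|n]; simpl t. simpl pow. ring.
    transitivity (gg Q (S n) * (x / Q) ^ S n + x ^ S n * (gg Q (S n) * (1 - (/ Q) ^ S n))).
    rewrite gg_S by auto. change (x ^ S n) with (x * x ^ n). ring.
    unfold Rdiv. rewrite Rpow_mult_distr. ring. }
  pose proof (is_series_unique _ _ S1). pose proof (is_series_unique _ _ S3). 
  rewrite H in H0. lra.
Qed.

Lemma GG_func Q x : 2 <= Q -> GG Q x = (1 - (1 - / Q) * x) * GG Q (x / Q).
Proof.
  intros HQ. unfold GG.
  replace ((Q - 1) * - x) with (Q * ((Q - 1) * - (x / Q))) by (field; lra).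
  rewrite ff_func by auto. f_equal. field. lra.
Qed.

Lemma FF_step Q x : 2 <= Q -> Rabs x < 1 -> HH Q (x / Q) * GG Q (x / Q) = HH Q x * GG Q x.
Proof.
  intros HQ Hx. rewrite HH_func by auto. rewrite (GG_func Q x) by auto. ring.
Qed.

Lemma FF_iter Q x k : 2 <= Q -> Rabs x < 1 ->
  HH Q (x * (/ Q) ^ k) * GG Q (x * (/ Q) ^ k) = HH Q x * GG Q x.
Proof.
  intros HQ Hx. induction k as [|k IH]. simpl. rewrite Rmult_1_r. reflexivity.
  replace (x * (/ Q) ^ S k) with ((x * (/ Q) ^ k) / Q) by (simpl; field; lra).
  rewrite FF_step; auto.
  rewrite Rabs_mult, <- RPow_abs, (Rabs_pos_eq (/ Q)) by (apply Rlt_le, Rinv_0_lt_compat; lra).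
  assert ((/ Q) ^ k <= 1) by (apply pow_le1; split; [apply Rlt_le, Rinv_0_lt_compat; lra | apply Rlt_le, Rinv_lt_1; lra]).
  assert (0 <= (/ Q) ^ k) by (apply pow_le, Rlt_le, Rinv_0_lt_compat; lra).
  pose proof (Rabs_pos x). set (Z := (/ Q) ^ k) in *. nra.
Qed.

Lemma HG_one Q x : 2 <= Q -> Rabs x < 1 -> HH Q x * GG Q x = 1.
Proof.
  intros HQ Hx.
  set (F := fun z => HH Q z * GG Q z).
  assert (Hc : continuity_pt F 0).
  { unfold F. apply continuity_pt_mult.
    - unfold HH. apply PSeries_continuity. apply in_gg; auto. rewrite Rabs_R0; lra.
    - unfold GG. apply (continuity_pt_comp (fun z => (Q - 1) * - z) (ff Q)).
      + reg.
      + unfold ff. apply PSeries_continuity. rewrite CV_dd by auto. exact I. }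
  assert (F0 : F 0 = 1).
  { unfold F, HH, GG, ff. rewrite Ropp_0, Rmult_0_r, !PSeries_0. unfold gg, dd. simpl. field. }
  set (u := fun k => x * (/ Q) ^ k).
  assert (Hu : Un_cv u 0).
  { apply is_lim_seq_Reals. unfold u.
    pose proof (is_lim_seq_scal_l _ x _ (is_lim_seq_geom (/ Q) ltac:(rewrite Rabs_pos_eq;
       [apply Rinv_lt_1; lra | apply Rlt_le, Rinv_0_lt_compat; lra]))) as L.
    simpl in L. rewrite Rmult_0_r in L. exact L. }
  pose proof (continuity_seq F u 0 Hc Hu) as Hs.
  apply is_lim_seq_Reals in Hs.
  assert (Hs2 : is_lim_seq (fun i => F (u i)) (F x)).
  { apply is_lim_seq_ext with (fun _ => F x). intros k. unfold F, u. rewrite FF_iter; auto.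
    apply is_lim_seq_const. }
  pose proof (is_lim_seq_unique _ _ Hs) as E1. pose proof (is_lim_seq_unique _ _ Hs2) as E2.
  rewrite E1 in E2. injection E2 as E2. fold (F x). rewrite <- E2. exact F0.
Qed.



Lemma num_nz (xi : Q) : Q2R xi <> 0 -> IZR (Qnum xi) <> 0.
Proof. intros H E. apply H. unfold Q2R. rewrite E. ring. Qed.

Lemma den_pos (r : Q) : 0 < IZR (QDen r).
Proof. apply IZR_lt. apply Pos2Z.is_pos. Qed.

Lemma part1_Q (q : nat) (xi : Q) : (1 < q)%nat -> Q2R xi <> 0 ->
  qexp (INR q) (Q2R xi) <> 0 -> forall V, isZ V -> V <> 0 -> isZ (V * qexp (INR q) (Q2R xi)) -> False.
Proof.
  intros Hq Hxi Hne V HV HV0 HVe.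
  set (Q := INR q) in *.
  assert (HQ : 2 <= Q) by (unfold Q; replace 2 with (INR 2) by (simpl; lra); apply le_INR; lia).
  assert (HQz : isZ Q) by (unfold Q; rewrite INR_IZR_INZ; apply isZ_IZR).
  rewrite qexp_ff in Hne, HVe by auto.
  assert (Ex : (Q - 1) * Q2R xi = ((Q - 1) * IZR (Qnum xi)) / IZR (QDen xi)).
  { unfold Q2R. unfold Rdiv. ring. }
  rewrite Ex in Hne, HVe.
  pose proof (den_pos xi).
  apply (part1_int Q ((Q - 1) * IZR (Qnum xi)) (IZR (QDen xi)) V); auto.
  - apply isZ_mult. apply isZ_minus; auto. apply isZ_1. apply isZ_IZR.
  - apply isZ_IZR.
  - apply Rmult_integral_contrapositive_currified. lra. apply num_nz; auto.
Qed.

Theorem corollary4p5p6 (q : nat) (xi : Q) :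
  (1 < q)%nat -> Q2R xi <> 0 ->
  (~ is_rational (qexp (INR q) (Q2R xi)) \/ qexp (INR q) (Q2R xi) = 0) /\
  (Rabs (Q2R xi) < 1 -> ~ is_rational (qexp (/ INR q) (Q2R xi))).
Proof.
  intros Hq Hxi.
  assert (HQ : 2 <= INR q) by (replace 2 with (INR 2) by (simpl; lra); apply le_INR; lia).
  split.
  - destruct (classic (qexp (INR q) (Q2R xi) = 0)) as [E|E]. right; auto.
    left. intros [r Hr].
    apply (part1_Q q xi Hq Hxi E (IZR (QDen r))).
    + apply isZ_IZR.
    + pose proof (den_pos r); lra.
    + rewrite Hr. unfold Q2R. exists (Qnum r).
      pose proof (den_pos r). field. lra.
  - intros Habs [r Hr].
    rewrite qexp_HH in Hr by auto.
    pose proof (HG_one (INR q) (Q2R xi) HQ Habs) as One.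
    assert (HGe : GG (INR q) (Q2R xi) = qexp (INR q) (Q2R (- xi))).
    { rewrite qexp_ff by auto. unfold GG. rewrite Q2R_opp. reflexivity. }
    assert (Hm : Q2R (- xi) <> 0) by (rewrite Q2R_opp; lra).
    rewrite HGe in One.
    assert (Hr0 : Q2R r <> 0) by (intro E; rewrite Hr, E in One; lra).
    apply (part1_Q q (- xi) Hq Hm) with (V := IZR (Qnum r)).
    + intro E. rewrite E in One. lra.
    + apply isZ_IZR.
    + apply num_nz; auto.
    + exists (Zpos (Qden r)).
      rewrite Hr in One.
      assert (E : qexp (INR q) (Q2R (- xi)) = / Q2R r).
      { apply (Rmult_eq_reg_l (Q2R r)); auto. rewrite One. field; auto. }
      rewrite E. unfold Q2R in *. pose proof (den_pos r). pose proof (num_nz r Hr0).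
      field. split; auto; lra.
Qed.
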